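(* Let $r \geq 1$ be an integer and define $f \in \mathbb{Z}^{2r+1}$ by $f_1 = f_2 = f_3 = 1$ and $f_i = f_{i-2} + f_{i-1}$ for $i = 4, \ldots, 2r+1$. Then for every integer $\tau$ with $0 \leq \tau \leq \sum_{i=1}^{2r+1} f_i$, there exists a subset $S \subseteq \{1, \ldots, 2r+1\}$ such that $\tau = \sum_{i \in S} f_i$. *)

(* Defs.v *)
From mathcomp Require Import all_boot.
Set Implicit Arguments. Unset Strict Implicit. Unset Printing Implicit Defensive.

(* fseq i = f_i (1-indexed): f_1 = f_2 = f_3 = 1, f_i = f_{i-2} + f_{i-1} for i >= 4.
   fseq 0 is an unused junk value (0). *)
Fixpoint fseq (i : nat) : nat :=
  match i with
  | 0 => 0
  | k.+1 =>
    match k with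
    | 0 | 1 | 2 => 1
    | j.+1 => fseq j + fseq k
    end
  end.

Lemma fseq_check : [seq fseq i | i <- iota 1 7] = [:: 1;1;1;2;3;5;8]. Proof. by []. Qed.

(* Main.v *)
Require Import Defs.
From mathcomp Require Import all_boot.

Lemma key k : fseq k.+1 <= (\sum_(i < k) fseq i.+1).+1.
Proof.
case: k => [|[|[|j]]]; try by rewrite ?big_ord_recr ?big_ord0.
have -> : fseq j.+4 = fseq j.+2 + fseq j.+3 by [].
rewrite big_ord_recr big_ord_recr.
rewrite /= -addnA; apply: leqW; exact: leq_addl.
Qed.

Lemma main n tau : tau <= \sum_(i < n) fseq i.+1 ->
  exists b : nat -> bool, tau = \sum_(i < n) b i * fseq i.+1.
Proof.
elim: n tau => [|n IH] tau.
  rewrite big_ord0 leqn0 => /eqP ->; exists (fun _ => false).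
  by rewrite big_ord0.
rewrite big_ord_recr /= => Ht.
case: (leqP tau (\sum_(i < n) fseq i.+1)) => Hle.
  have [b Hb] := IH _ Hle.
  exists (fun i => if i == n then false else b i).
  rewrite big_ord_recr /= eqxx mul0n addn0 Hb.
  by apply: eq_bigr => i _; rewrite ltn_eqF.
have Hf : fseq n.+1 <= tau by apply: leq_trans (key n) Hle.
have Hle' : tau - fseq n.+1 <= \sum_(i < n) fseq i.+1 by rewrite leq_subLR addnC.
have [b Hb] := IH _ Hle'.
exists (fun i => (i == n) || b i).
rewrite big_ord_recr /= eqxx mul1n.
rewrite (eq_bigr (fun i : 'I_n => b i * fseq i.+1)); last first.
  by move=> i _; rewrite ltn_eqF.
by rewrite -Hb subnK.
Qed.

(* Indices {1,...,2r+1} are represented by i : 'I_(2r+1), standing for i+1. *)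
Theorem lemma2 (r : nat) (hr : 1 <= r) (tau : nat)
  (htau : tau <= \sum_(i < 2 * r + 1) fseq i.+1) :
  exists S : {set 'I_(2 * r + 1)}, tau = \sum_(i in S) fseq i.+1.
Proof.
have [b Hb] := main _ _ htau.
exists [set i : 'I_(2 * r + 1) | b i].
rewrite Hb [RHS]big_mkcond; apply: eq_bigr => i _.
by rewrite inE; case: (b i); rewrite ?mul1n ?mul0n.
Qed.
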